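(* Let $\Delta,\Sigma$ be alphabets, $\varphi:\Delta\to2^{\Sigma^*}$ a regular language substitution, and $K_1,K_2\subseteq\Delta^+$ regular languages such that $\mathcal{R}_1=(K_1,\varphi)$ and $\mathcal{R}_2=(K_2,\varphi)$ are finite. Then the symmetric difference $\mathcal{R}_1\,\Delta\,\mathcal{R}_2=(\mathcal{R}_1\cup\mathcal{R}_2)-(\mathcal{R}_1\cap\mathcal{R}_2)$ is a finite rational set of regular languages that can be expressed with the language substitution $\varphi$, i.e. it equals $(K_3,\varphi)$ for some regular $K_3\subseteq\Delta^+$.
   Context: A regular language substitution $\varphi:\Delta\to2^{\Sigma^*}$ maps each symbol to a regular language over $\Sigma$, extended by $\varphi(\delta w)=\varphi(\delta)\varphi(w)$. For $K\subseteq\Delta^+$, $(K,\varphi)=\{\varphi(w)\mid w\in K\}$; when $K$ is regular this set is a rational set of regular languages. *)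

(* Defs.v *)
(* Languages are Prop-valued predicates on words;
   sets of languages are predicates on languages (Leibniz equality of languages,
   i.e. extensional via funext/propext). *)
From Stdlib Require List.
From mathcomp Require Import all_boot.
Set Implicit Arguments. Unset Strict Implicit. Unset Printing Implicit Defensive.

Definition lang (A : finType) := seq A -> Prop.

Record dfa (A : finType) := DFA {
  dfa_state : finType;
  dfa_s0 : dfa_state;
  dfa_final : pred dfa_state;
  dfa_step : dfa_state -> A -> dfa_state }.

Definition dfa_accepts (A : finType) (M : dfa A) (w : seq A) : bool :=
  @dfa_final A M (foldl (@dfa_step A M) (@dfa_s0 A M) w).

Definition regular (A : finType) (L : lang A) : Prop :=
  exists M : dfa A, forall w, L w <-> dfa_accepts M w.

Definition in_plus (A : finType) (L : lang A) : Prop :=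
  forall w, L w -> w <> [::].

Definition lang_eps (A : finType) : lang A := fun w => w = [::].

Definition lang_cat (A : finType) (L1 L2 : lang A) : lang A :=
  fun w => exists u v, w = u ++ v /\ L1 u /\ L2 v.

Definition subst_word (D S : finType) (phi : D -> lang S) (w : seq D) : lang S :=
  foldr (fun d L => lang_cat (phi d) L) (@lang_eps S) w.

Definition regular_subst (D S : finType) (phi : D -> lang S) : Prop :=
  forall d, regular (phi d).

Definition subst_set (D S : finType) (K : lang D) (phi : D -> lang S)
  : lang S -> Prop :=
  fun L => exists w, K w /\ L = subst_word phi w.

Definition finite_langset (S : finType) (R : lang S -> Prop) : Prop :=
  exists l : seq (lang S), forall L, R L <-> List.In L l.

Definition symdiff_langset (S : finType) (R1 R2 : lang S -> Prop)
  : lang S -> Prop :=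
  fun L => (R1 L \/ R2 L) /\ ~ (R1 L /\ R2 L).

(* Main.v *)
Require Import Defs.
From Stdlib Require Import Classical.
From mathcomp Require Import all_boot.
Set Implicit Arguments.

Section Aux.
Variable A : finType.

Definition empty_dfa : dfa A := @DFA A unit tt pred0 (fun _ _ => tt).

Lemma regular_nil : regular (fun v : seq A => v \in [::]).
Proof. exists empty_dfa => w; rewrite in_nil /dfa_accepts /=; split => //. Qed.

Section Single.
Variable w : seq A.
Let n := size w.
Definition sstep (i : 'I_(n.+2)) (a : A) : 'I_(n.+2) :=
  inord (if (i < n) && (nth a w i == a) then i.+1 else n.+1).
Definition single_dfa : dfa A :=
  @DFA A 'I_(n.+2) (inord 0) (fun i => val i == n) sstep.

Lemma single_inv v : forall i, i <= n.+1 ->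
  (val (foldl sstep (inord i) v) == n) = (i <= n) && (v == drop i w).
Proof.
elim: v => [|a v IH] i Hi /=.
  rewrite inordK // (eq_sym [::]) -size_eq0 size_drop subn_eq0.
  by case: (ltngtP i n).
have E : sstep (inord i) a = inord (if (i < n) && (nth a w i == a) then i.+1 else n.+1).
  by rewrite /sstep inordK.
rewrite E IH; last by case: ifP => // /andP [H _]; rewrite ltnS ltnW.
case: (ltnP i n) => H /=.
  rewrite (drop_nth a H) eqseq_cons.
  case: eqP => Ha /=.
    by rewrite H ltnW // Ha eqxx.
  rewrite ltnn /=; case: eqP => Hb; [by case: Ha | by rewrite andbF].
rewrite ltnn /=; case: (leqP i n) => H2 //=.
have -> : i = n by apply/eqP; rewrite eqn_leq H2 H.
by rewrite drop_size.
Qed.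

Lemma regular_single : regular (fun v => v = w).
Proof.
exists single_dfa => v; rewrite /dfa_accepts /=.
rewrite (@single_inv v 0 (leq0n _)) drop0 /=; split; [move=> -> // | by move/eqP].
Qed.
End Single.

Definition union_dfa (M1 M2 : dfa A) : dfa A :=
  @DFA A (dfa_state M1 * dfa_state M2)%type (dfa_s0 M1, dfa_s0 M2)
    (fun p => dfa_final p.1 || dfa_final p.2)
    (fun p a => (dfa_step p.1 a, dfa_step p.2 a)).

Lemma union_fold (M1 M2 : dfa A) v p :
  foldl (@dfa_step A (union_dfa M1 M2)) p v =
  (foldl (@dfa_step A M1) p.1 v, foldl (@dfa_step A M2) p.2 v).
Proof. by elim: v p => [|a v IH] [p1 p2] //=; rewrite IH. Qed.

Lemma regular_U (L1 L2 : lang A) : regular L1 -> regular L2 ->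
  regular (fun v => L1 v \/ L2 v).
Proof.
move=> [M1 H1] [M2 H2]; exists (union_dfa M1 M2) => v.
rewrite /dfa_accepts union_fold /= -!/(dfa_accepts _ _) H1 H2.
by split; [case=> ->; rewrite ?orbT | case/orP; auto].
Qed.

Lemma regular_ext (L1 L2 : lang A) : (forall v, L1 v <-> L2 v) -> regular L1 -> regular L2.
Proof. move=> E [M H]; exists M => v; rewrite -H; by split; apply E. Qed.

Lemma regular_list (lw : seq (seq A)) : regular (fun v => v \in lw).
Proof.
elim: lw => [|w lw IH]; first exact: regular_nil.
apply: regular_ext (regular_U (regular_single w) IH) => v.
by rewrite in_cons; split; [case=> [->|->]; rewrite ?eqxx ?orbT | case/orP; [move/eqP|]; auto].
Qed.
End Aux.

Lemma finite_sub (X : Type) (l : list X) : forall (R : X -> Prop),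
  (forall x, R x -> List.In x l) -> exists l', forall x, R x <-> List.In x l'.
Proof.
elim: l => [|y l IH] R HR.
  by exists nil => x; split => // /HR.
have [l'' Hl''] := IH (fun x => R x /\ x <> y)
  ltac:(move=> x [Rx Nx]; case: (HR x Rx) => // E; by case: Nx).
case: (classic (R y)) => Ry.
  exists (y :: l'') => x; split => /=.
    move=> Rx; case: (classic (x = y)) => E; [by left | right; apply/Hl''; auto].
  by case=> [<- // | /Hl'' []].
exists l'' => x; split.
  move=> Rx; apply/Hl''; split => // E; by subst.
by case/Hl''.
Qed.

Lemma choose_list (X : Type) (Y : eqType) (P : X -> Y -> Prop) (l : list X) :
  (forall x, List.In x l -> exists y, P x y) ->
  exists ly : seq Y, (forall y, y \in ly -> exists x, List.In x l /\ P x y) /\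
    (forall x, List.In x l -> exists y, y \in ly /\ P x y).
Proof.
elim: l => [|x l IH] H.
  by exists [::]; split => //.
have [ly [H1 H2]] := IH (fun z Hz => H z (or_intror Hz)).
have [y Py] := H x (or_introl erefl).
exists (y :: ly); split.
  move=> z; rewrite in_cons; case/orP => [/eqP -> | /H1 [x' [? ?]]].
    by exists x; split => //; left.
  by exists x'; split => //; right.
move=> x' /= [<- | Hx'].
  by exists y; rewrite in_cons eqxx.
have [z [? ?]] := H2 x' Hx'; exists z; by rewrite in_cons orbC; split => //; apply/orP; left.
Qed.

Theorem proposition11 (D S : finType) (phi : D -> lang S) (K1 K2 : lang D) :
  regular_subst phi ->
  regular K1 -> in_plus K1 ->
  regular K2 -> in_plus K2 ->
  finite_langset (subst_set K1 phi) ->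
  finite_langset (subst_set K2 phi) ->
  finite_langset (symdiff_langset (subst_set K1 phi) (subst_set K2 phi)) /\
  exists K3 : lang D, regular K3 /\ in_plus K3 /\
    forall L, symdiff_langset (subst_set K1 phi) (subst_set K2 phi) L <->
              subst_set K3 phi L.
Proof.
move=> _ _ P1 _ P2 [l1 H1] [l2 H2].
have [l3 H3] := @finite_sub _ (l1 ++ l2)
  (symdiff_langset (subst_set K1 phi) (subst_set K2 phi))
  ltac:(move=> L [[/H1|/H2] HL _]; apply List.in_or_app; auto).
split; first by exists l3.
have [lw [Hw1 Hw2]] := @choose_list _ _
  (fun L w => (K1 w \/ K2 w) /\ L = subst_word phi w) l3
  ltac:(move=> L /H3 [[[w [? ?]]|[w [? ?]]] _]; exists w; auto).
exists (fun w => w \in lw); split; first exact: regular_list.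
split.
  by move=> w /Hw1 [L [_ [[/P1|/P2] ? _]]].
move=> L; split.
  move/H3/Hw2 => [w [? [_ ?]]]; by exists w.
move=> [w [/Hw1 [L' [HL' [_ E]]] ->]]; rewrite -E; exact/H3.
Qed.
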